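(* Let $\mathbb P$ be the law of a stationary simple point process on $\mathbb R^d$ with finite positive intensity $m$ and $\mathbb P(\xi\ne\emptyset)=1$. Suppose Condition $C(\alpha)$ holds for some $\alpha>0$ and $\rho_\gamma<+\infty$ for some $\gamma>1$. Then there is a constant $C_0>0$ such that $$\sup_{x\in\mathbb R^d}\mathbb P_0\big(\xi(\Lambda_\ell(x))=0\big)\le C_0\ell^{-\alpha/\gamma'}\qquad\forall\ell>0,$$ where $\gamma'=\frac{\gamma}{\gamma-1}$.
   Context: $\mathcal N$ = locally finite subsets of $\mathbb R^d$, identified with counting measures ($\xi(A)=\#(\xi\cap A)$); $\tau_x\xi=\xi-x$; stationarity: $\mathbb P(\tau_xA)=\mathbb P(A)$; $m=\mathbb E[\xi([0,1]^d)]$. $\Lambda_\ell(x)=x+[-\ell,\ell]^d$, $\Lambda_\ell=\Lambda_\ell(0)$. $\rho_\gamma=\mathbb E[\xi([0,1]^d)^\gamma]$. Palm distribution $\mathbb P_0(A)=\frac1m\int d\mathbb P(\xi)\sum_{x\in\xi\cap[0,1]^d}\mathbf 1_A(\tau_x\xi)$. Condition $C(\alpha)$: $\exists\kappa>0$ with $\mathbb P(\xi(\Lambda_\ell)=0)\le\kappa\ell^{-\alpha}$ for all $\ell\ge1$. *)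

(* Defs.v *)
From HB Require Import structures.
From mathcomp Require Import all_boot all_order all_algebra.
From mathcomp Require Import all_classical all_reals all_analysis.
Set Implicit Arguments. Unset Strict Implicit. Unset Printing Implicit Defensive.
Import Order.TTheory GRing.Theory Num.Theory.
Local Open Scope classical_set_scope.
Local Open Scope ring_scope.

(* Points of R^d are row vectors 'rV[R]_d; configurations are subsets of R^d
   (simple point processes: a configuration is identified with its
   counting measure xi(A) = #(xi \cap A)). *)
Section PP.
Variables (R : realType) (d : nat).
Local Notation pt := 'rV[R]_d.

Definition box (a b : pt) : set pt :=
  [set y | forall i, a 0 i <= y 0 i <= b 0 i].

Definition Lam (l : R) (x : pt) : set pt :=
  [set y | forall i, x 0 i - l <= y 0 i <= x 0 i + l].

Definition unit_cube : set pt := [set y | forall i, 0 <= y 0 i <= 1].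

Definition cnt (xi A : set pt) : \bar R := counting (xi `&` A).

Definition tau (x : pt) (xi : set pt) : set pt := [set y - x | y in xi].

Definition locally_finite (xi : set pt) : Prop :=
  forall l : R, finite_set (xi `&` Lam l 0).

Definition cnt_events : set (set (set pt)) :=
  [set E | exists a b (k : \bar R), E = [set xi | cnt xi (box a b) = k]].

End PP.

Definition Config (R : realType) (d : nat) :=
  g_sigma_algebraType (@cnt_events R d).

Definition palm (R : realType) (d : nat) (P : probability (Config R d) R)
  (m : R) (A : set (Config R d)) : \bar R :=
  ((m^-1)%:E * \int[P]_xi
     (\esum_(x in (xi : set 'rV[R]_d) `&` @unit_cube R d)
        (\1_A (tau x xi : Config R d))%:E))%E.

(* Main.v *)
Require Import Defs.
From HB Require Import structures.
From mathcomp Require Import all_boot all_order all_algebra.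
From mathcomp Require Import all_classical all_reals all_analysis.
From mathcomp Require Import measurable_realfun lra ring.
Import Order.TTheory GRing.Theory Num.Theory.
Local Open Scope classical_set_scope.
Local Open Scope ring_scope.

Lemma my_le_integral d (T : measurableType d) (R : realType) (mu : {measure set T -> \bar R})
  (f g : T -> \bar R) : (forall x, (0 <= f x)%E) -> (forall x, (f x <= g x)%E) ->
  (\int[mu]_x f x <= \int[mu]_x g x)%E.
Proof.
move=> f0 fg.
have g0 x : (0 <= g x)%E by apply: le_trans (f0 x) (fg x).
rewrite !ge0_integralTE //; apply: le_ereal_sup => _ [h hf <-]; exists h => //= x.
exact: le_trans (hf x) (fg x).
Qed.

Lemma counting0P (T : choiceType) (R : realType) (X : set T) :
  (counting X = 0 :> \bar R)%E <-> X = set0.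
Proof.
split; last by move=> ->; rewrite /counting asboolT // fset_set0.
rewrite /counting; case: asboolP => finX //.
move=> /(congr1 fine) /= /eqP; rewrite pnatr_eq0 finmap.cardfs_eq0 => /eqP.
exact: fset_set_set0.
Qed.

Lemma esum_one_le (T : choiceType) (R : realType) (S : set T) :
  (\esum_(i in S) (1%E : \bar R) <= counting S)%E.
Proof.
case: (pselect (finite_set S)) => fS; last by rewrite /counting asboolF // leey.
rewrite esum_fset // (_ : 1%E = (1:R)%:E) // fsumEFin // fsbig_finite //.
rewrite /counting asboolT // lee_fin.
by rewrite -sum1_size natr_sum.
Qed.
Lemma young_pt (R : realType) (g q a : R) : 1 < g -> 0 < q -> 0 <= a ->
  a <= q `^ (1 - g^-1) * a `^ g + q `^ (- g^-1).
Proof.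
move=> g1 q0 a0.
have B0 : 0 < q `^ (- g^-1) by apply: powR_gt0.
have A0 : 0 <= q `^ (1 - g^-1) by apply: powR_ge0.
case: (leP a (q `^ (- g^-1))) => ha.
  by apply: le_trans ha _; rewrite lerDr mulr_ge0 // powR_ge0.
have apos : 0 < a by apply: lt_trans ha.
have ag : a `^ g = a * a `^ (g - 1).
  rewrite -{2}(powRr1 (ltW apos)) -powRD; last by apply/implyP => _; rewrite gt_eqF.
  by congr (_ `^ _); lra.
have key : 1 <= q `^ (1 - g^-1) * a `^ (g - 1).
  have h1 : q `^ (- g^-1) `^ (g - 1) <= a `^ (g - 1).
    apply: ge0_ler_powR; rewrite ?nnegrE; try lra; exact: ltW.
  apply: le_trans (ler_wpM2l A0 h1).
  rewrite -powRrM -powRD; last by apply/implyP => _; rewrite gt_eqF.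
  have gne : g != 0 by rewrite gt_eqF //; lra.
  rewrite (_ : 1 - g^-1 + - g^-1 * (g - 1) = 0); first by rewrite powRr0.
  by field.
suff h : a <= q `^ (1 - g^-1) * a `^ g by apply: le_trans h _; rewrite lerDl ltW.
rewrite ag mulrCA.
by rewrite ler_peMr // ltW.
Qed.

Lemma young_ext (R : realType) (g q c : R) (v : \bar R) : 1 < g -> 0 < q ->
  (c = 0 \/ c = 1) -> (0 <= v)%E ->
  (c%:E * v <= (q `^ (1 - g^-1))%:E * v `^ g + (q `^ (- g^-1))%:E * c%:E)%E.
Proof.
move=> g1 q0 [->|->] v0.
  rewrite mul0e; apply: adde_ge0; apply: mule_ge0; rewrite ?lee_fin ?powR_ge0 ?poweR_ge0 //.
rewrite mul1e mule1.
case: v v0 => [r| |] //; rewrite ?lee_fin => r0.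
  exact: young_pt.
rewrite poweRyr; last by rewrite gt_eqF //; lra.
rewrite mulry gtr0_sg ?powR_gt0 // mul1e addye //.
Qed.
Section PP.
Variables (R : realType) (d : nat).
Local Notation pt := 'rV[R]_d.
Local Notation Cf := (Config R d).

Lemma Lam0_box (l : R) : Lam l (0 : pt) = box (const_mx (- l)) (const_mx l).
Proof.
by apply/seteqP; split => y /= H i; have := H i; rewrite !mxE sub0r add0r.
Qed.

Lemma unit_cube_box : @unit_cube R d = box (const_mx 0) (const_mx 1).
Proof.
by apply/seteqP; split => y /= H i; have := H i; rewrite !mxE.
Qed.

Lemma meas_cnt_event (a b : pt) k :
  measurable ([set xi : Cf | cnt xi (box a b) = k]).
Proof. by apply: sub_sigma_algebra; exists a, b, k. Qed.

Lemma meas_cnt_comp (a b : pt) (g : \bar R -> \bar R) :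
  measurable_fun [set: Cf] (fun xi : Cf => g (cnt xi (box a b))).
Proof.
move=> _ B mB; rewrite setTI; rewrite -/(preimage _ B).
have -> : (fun xi : Cf => g (cnt xi (box a b))) @^-1` B =
  \bigcup_n ([set xi : Cf | cnt xi (box a b) = (n%:R)%:E] `&` [set _ | B (g (n%:R)%:E)])
  `|` ([set xi : Cf | cnt xi (box a b) = +oo%E] `&` [set _ | B (g +oo%E)]).
  apply/seteqP; split => xi /=.
    rewrite /cnt /counting; case: (pselect (finite_set (xi `&` box a b))) => fin.
      rewrite asboolT // => Bx; left.
      exists (size (finmap.enum_fset (fset_set (xi `&` box a b)))) => //; split => //=.
      by rewrite /cnt /counting asboolT.
    rewrite asboolF // => Bx; right; split => //=.
  by case=> [[n _ []]|[]] /= ->.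
have mc (P : Prop) : measurable ([set xi : Cf | P]).
  by case: (pselect P) => p; [rewrite (_ : [set xi : Cf | P] = setT) ?predeqE // | rewrite (_ : [set xi : Cf | P] = set0) ?predeqE].
apply: measurableU; last by apply: measurableI => //; exact: meas_cnt_event.
by apply: bigcupT_measurable => n; apply: measurableI => //; exact: meas_cnt_event.
Qed.


Lemma Lam_box l (x : pt) : Lam l x = box (x - const_mx l) (x + const_mx l).
Proof.
by apply/seteqP; split => y /= H i; have := H i; rewrite !mxE.
Qed.

Lemma cnt_ge0 (xi A : set pt) : (0 <= cnt xi A)%E.
Proof. by rewrite /cnt /counting; case: ifP => _; rewrite ?lee_fin ?leey. Qed.

Lemma cnt0P (xi A : set pt) : cnt xi A = 0%E <-> (forall y, xi y -> ~ A y).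
Proof.
rewrite /cnt counting0P; split => [H y xy Ay|H].
  by have : (xi `&` A) y by []; rewrite H.
by apply/seteqP; split => // y [] /H.
Qed.

Lemma tau_mem (x : pt) (xi : set pt) z : tau x xi z <-> xi (z + x).
Proof.
split => [[y xy <-]|h]; first by rewrite subrK.
by exists (z + x) => //; rewrite addrK.
Qed.

Lemma meas_E l (x : pt) : measurable [set xi : Cf | cnt xi (Lam l x) = 0%E].
Proof. by rewrite Lam_box; exact: meas_cnt_event. Qed.

Lemma stat_shift (P : probability Cf R)
  (Hstat : forall (x : 'rV[R]_d) (A : set (Config R d)),
      measurable A -> P ((fun xi : Config R d => (tau x (xi : set 'rV[R]_d) : Config R d)) @` A) = P A)
  l (x : pt) :
  P [set xi : Cf | cnt xi (Lam l x) = 0%E] = P [set xi : Cf | cnt xi (Lam l 0) = 0%E].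
Proof.
rewrite -(Hstat (- x) _ (meas_E l 0)); congr (P _).
apply/seteqP; split => [zeta /= /cnt0P Hz|_ [xi /= /cnt0P Hx <-]].
  exists (tau x zeta : Cf).
    apply/cnt0P => y /tau_mem zy Ly; apply: (Hz _ zy) => i.
    have := Ly i; rewrite !mxE; lra.
  apply/seteqP; split => z.
    by move/tau_mem/tau_mem; rewrite addrNK.
  by move=> h; apply/tau_mem/tau_mem; rewrite addrNK.
apply/cnt0P => y /tau_mem => xy Ly; apply: (Hx _ xy) => i.
have := Ly i; rewrite !mxE; lra.
Qed.

Lemma palm_le (P : probability Cf R) m (E F : set Cf) : 0 < m ->
  (forall (xi : Cf) y, (xi : set pt) y -> @unit_cube R d y -> E (tau y xi) -> F xi) ->
  (palm P m E <= (m^-1)%:E * \int[P]_xi ((\1_F xi)%:E * cnt xi (@unit_cube R d)))%E.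
Proof.
move=> m0 H; rewrite /palm; apply: lee_wpmul2l; first by rewrite lee_fin invr_ge0 ltW.
apply: my_le_integral => xi.
  by apply: esum_ge0 => y _; rewrite lee_fin.
case: (pselect (F xi)) => Fx.
  rewrite indicE mem_set // mul1e /cnt.
  have h1 := @esum_one_le _ R (xi `&` @unit_cube R d).
  apply: (le_trans _ h1).
  by apply: le_esum => y _; rewrite lee_fin indicE; case: (_ \in _).
rewrite indicE memNset // mul0e esum1 // => y [xy cy]; rewrite indicE memNset //.
by move=> Ey; exact: Fx (H _ _ xy cy Ey).
Qed.


Lemma young_int (P : probability Cf R) (F : set Cf) (g q : R) :
  1 < g -> 0 < q -> measurable F ->
  measurable_fun [set: Cf] (fun xi : Cf => (\1_F xi : R)%:E) -> (P F <= q%:E)%E ->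
  (\int[P]_xi (cnt xi (@unit_cube R d) `^ g) < +oo)%E ->
  (\int[P]_xi ((\1_F xi)%:E * cnt xi (@unit_cube R d)) <=
    (q `^ (1 - g^-1) * (fine (\int[P]_xi (cnt xi (@unit_cube R d) `^ g)) + 1))%:E)%E.
Proof.
move=> g1 q0 mF mIF PF Hr.
set rho := (\int[P]_xi (cnt xi (@unit_cube R d) `^ g))%E.
have rho0 : (0 <= rho)%E by apply: integral_ge0 => xi _; exact: poweR_ge0.
have rhoE : rho = (fine rho)%:E by rewrite fineK // ge0_fin_numE.
have I0 (xi : Cf) : (0 <= (\1_F xi)%:E :> \bar R)%E by rewrite lee_fin indicE; case: (_ \in _).
set A := q `^ (1 - g^-1); set B := q `^ (- g^-1).
have A0 : 0 <= A by apply: powR_ge0.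
have B0 : 0 <= B by apply: powR_ge0.
have L := (@my_le_integral _ _ _ P (fun xi : Cf => (\1_F xi)%:E * cnt xi (@unit_cube R d))%E (fun xi : Cf => A%:E * cnt xi (@unit_cube R d) `^ g + B%:E * (\1_F xi)%:E)%E).
apply: (le_trans (L _ _)).
- by move=> xi; apply: mule_ge0 => //; exact: cnt_ge0.
- move=> xi; apply: young_ext => //; last exact: cnt_ge0.
  by rewrite indicE; case: (_ \in _); [right|left].
have mN : measurable_fun [set: Cf] (fun xi : Cf => A%:E * cnt xi (@unit_cube R d) `^ g)%E.
  by rewrite unit_cube_box; exact: (meas_cnt_comp _ _ (fun v => A%:E * v `^ g)%E).
rewrite ge0_integralD //; last 3 first.
- by move=> xi _; apply: mule_ge0; rewrite ?lee_fin // poweR_ge0.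
- by move=> xi _; apply: mule_ge0 => //; rewrite lee_fin.
- by apply: emeasurable_funM => //; exact: measurable_cst.
have mN' : measurable_fun [set: Cf] (fun xi : Cf => cnt xi (@unit_cube R d) `^ g)%E.
  by rewrite unit_cube_box; exact: (meas_cnt_comp _ _ (fun v => v `^ g)%E).
rewrite ge0_integralZl_EFin //; last by move=> xi _; exact: poweR_ge0.
rewrite ge0_integralZl_EFin // integral_indic // setIT.
rewrite -/rho rhoE.
apply: le_trans (leeD2l _ (lee_wpmul2l _ PF)) _; first by rewrite lee_fin.
rewrite -!EFinM -EFinD lee_fin.
have -> : B * q = A.
  rewrite /A /B -{2}(powRr1 (ltW q0)) -powRD; last by apply/implyP => _; rewrite gt_eqF.
  by congr (_ `^ _); ring.
by rewrite mulrDr mulr1.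
Qed.

End PP.
Theorem lemma10p3 (R : realType) (d : nat) (d_gt0 : (0 < d)%N)
  (P : probability (Config R d) R) (m alpha gamma : R)
  (* a.s. locally finite configurations *)
  (Hlf : {ae P, forall xi : Config R d, locally_finite xi})
  (* stationarity: P(tau_x A) = P(A) for all measurable events A *)
  (Hstat : forall (x : 'rV[R]_d) (A : set (Config R d)),
      measurable A -> P ((fun xi : Config R d => (tau x (xi : set 'rV[R]_d) : Config R d)) @` A) = P A)
  (* finite positive intensity m = E[xi([0,1]^d)] *)
  (Hm : (\int[P]_xi cnt xi (@unit_cube R d) = m%:E)%E)
  (m_gt0 : 0 < m)
  (* P(xi <> empty) = 1 *)
  (Hne : P [set xi : Config R d | xi <> set0] = 1%E)
  (* condition C(alpha) *)
  (alpha_gt0 : 0 < alpha)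
  (HC : exists2 kappa : R, 0 < kappa & forall l : R, 1 <= l ->
      (P [set xi : Config R d | cnt xi (Lam l 0) = 0%E] <= (kappa * l `^ (- alpha))%:E)%E)
  (* rho_gamma < +oo for some gamma > 1 *)
  (gamma_gt1 : 1 < gamma)
  (Hrho : (\int[P]_xi (cnt xi (@unit_cube R d) `^ gamma) < +oo)%E) :
  exists2 C0 : R, 0 < C0 & forall l : R, 0 < l -> forall x : 'rV[R]_d,
    (palm P m [set xi : Config R d | cnt xi (Lam l x) = 0%E]
       <= (C0 * l `^ (- (alpha / (gamma / (gamma - 1)))))%:E)%E.
Proof.
case: HC => kappa k0 HC.
set rho := (\int[P]_xi (cnt xi (@unit_cube R d) `^ gamma))%E.
set r := fine rho.
set be := alpha / (gamma / (gamma - 1)).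
have g0 : gamma != 0 by rewrite gt_eqF //; lra.
have g10 : gamma - 1 != 0 by rewrite gt_eqF //; lra.
have be0 : 0 < be.
  by rewrite /be divr_gt0 // divr_gt0 //; lra.
have beE : be = alpha * (1 - gamma^-1) by rewrite /be; field; rewrite g0 g10.
have r0 : 0 <= r by apply: fine_ge0; apply: integral_ge0 => xi _; exact: poweR_ge0.
set K := kappa `^ (1 - gamma^-1).
have K0 : 0 <= K by apply: powR_ge0.
set t := 2 `^ be.
have t0 : 0 < t by apply: powR_gt0.
set s := m^-1 * (K * (r + 1)).
have s0 : 0 <= s.
  by apply: mulr_ge0; [rewrite invr_ge0 ltW | apply: mulr_ge0 => //; lra].
exists (t * (1 + s)); first by rewrite mulr_gt0 //; lra.
move=> l l0 x.
have lb0 : 0 < l `^ be by apply: powR_gt0.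
have lbN : l `^ (- be) = (l `^ be)^-1 by rewrite powRN.
case: (ltP l 2) => hl.
- have h1 := @palm_le R d P m [set xi : Config R d | cnt xi (Lam l x) = 0%E] setT m_gt0
    (fun _ _ _ _ _ => I).
  apply: le_trans h1 _.
  have -> : (\int[P]_xi ((\1_setT xi)%:E * cnt xi (@unit_cube R d)))%E =
            (\int[P]_xi cnt xi (@unit_cube R d))%E.
    by apply: eq_integral => xi _; rewrite indicT mul1e.
  rewrite Hm -EFinM mulVf ?gt_eqF // lee_fin.
  have hb : l `^ be <= t by apply: ge0_ler_powR; rewrite ?nnegrE; lra.
  have : 1 <= t * l `^ (- be).
    by rewrite lbN ler_pdivlMr // mul1r.
  move=> h; rewrite mulrAC; apply: mulr_ege1 => //; lra.
- set F := [set xi : Config R d | cnt xi (Lam (l - 1) x) = 0%E].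
  have incl : forall (xi : Config R d) y, (xi : set 'rV[R]_d) y -> @unit_cube R d y ->
      [set xi : Config R d | cnt xi (Lam l x) = 0%E] (tau y xi) -> F xi.
    move=> xi y xy cy /cnt0P HE; apply/cnt0P => z xz Lz.
    apply: (HE (z - y)); first by apply/tau_mem; rewrite subrK.
    by move=> i; have := Lz i; have := cy i; rewrite !mxE; lra.
  apply: le_trans (@palm_le R d P m _ F m_gt0 incl) _.
  set q := kappa * (l - 1) `^ (- alpha).
  have q0 : 0 < q by rewrite mulr_gt0 // powR_gt0 //; lra.
  have PF : (P F <= q%:E)%E.
    by rewrite /F stat_shift //; apply: HC; lra.
  have mF : measurable F by exact: meas_E.
  have mIF : measurable_fun [set: Config R d] (fun xi : Config R d => (\1_F xi : R)%:E).
    rewrite /F Lam_box; exact: (@meas_cnt_comp R d _ _ (fun v => (\1_[set 0%E] v : R)%:E)).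
  have Y := @young_int R d P F gamma q gamma_gt1 q0 mF mIF PF Hrho.
  apply: le_trans (lee_wpmul2l _ Y) _; first by rewrite lee_fin invr_ge0 ltW.
  rewrite -/rho -/r -EFinM lee_fin.
  have qE : q `^ (1 - gamma^-1) = K * (l - 1) `^ (- be).
    rewrite /q powRM; [|exact: ltW|exact: powR_ge0].
    by rewrite -powRrM beE mulNr.
  rewrite qE.
  have l1b : 0 < (l - 1) `^ be by apply: powR_gt0; lra.
  have hv : (l - 1) `^ (- be) <= t * l `^ (- be).
    rewrite !powRN /t.
    have hb : l `^ be <= 2 `^ be * (l - 1) `^ be.
      rewrite -powRM; try lra.
      by apply: ge0_ler_powR; rewrite ?nnegrE; lra.
    have -> : ((l - 1) `^ be)^-1 = t * (t * (l - 1) `^ be)^-1.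
      by field; rewrite !gt_eqF.
    apply: ler_wpM2l; first exact: ltW.
    by rewrite lef_pV2 ?posrE // mulr_gt0.
  have v0 : 0 <= (l - 1) `^ (- be) by apply: powR_ge0.
  set v := (l - 1) `^ (- be) in hv v0 *.
  set w := l `^ (- be) in hv *.
  have -> : m^-1 * (K * v * (r + 1)) = s * v by rewrite /s; ring.
  have -> : t * (1 + s) * w = t * w + s * (t * w) by ring.
  have tw0 : 0 <= t * w by apply: le_trans v0 hv.
  nra.
Qed.
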